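(* Let $d\ge 1$, $T\ge 1$, let $\mathcal{X}\subseteq\mathbb{R}^d$ be a non-empty closed convex set, and let $0<\mu\le L$. Let $f_1,\dots,f_T:\mathcal{X}\to[0,\infty)$ be differentiable with $\frac{\mu}{2}\|y-x\|^2\le f_t(y)-f_t(x)-\langle\nabla f_t(x),y-x\rangle\le\frac{L}{2}\|y-x\|^2$ for all $t$ and $x,y\in\mathcal{X}$. Let $x_1,\dots,x_T$ be the iterates of the OMGD algorithm with $K=\lceil\frac{L+\mu}{2\mu}\ln4\rceil$ from a starting point $x_0\in\mathcal{X}$, and let $C_{\mathcal{A}_o}=\sum_{t=1}^T\big(f_t(x_t)+\|x_t-x_{t-1}\|\big)$. Then for any $\alpha>0$, $$C_{\mathcal{A}_o}\le\sum_{t=1}^T f_t(x_t^\star)+\frac{1}{2\alpha}\sum_{t=1}^T\|\nabla f_t(x_t^\star)\|^2+(L+\alpha)\big(\|x_1-x_1^\star\|^2+2\mathcal{P}_{2,T}^\star\big)+3\|x_1-x_1^\star\|+3\mathcal{P}_T^\star.$$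
   Context: $x_t^\star=\arg\min_{x\in\mathcal{X}}f_t(x)$, $\mathcal{P}_T^\star=\sum_{t=2}^T\|x_t^\star-x_{t-1}^\star\|$, $\mathcal{P}_{2,T}^\star=\sum_{t=2}^T\|x_t^\star-x_{t-1}^\star\|^2$. OMGD with parameter $K$: $x_1=x_0$; for $t=2,\dots,T$, $z_t^{(0)}=x_{t-1}$, $z_t^{(k)}=\Pi_{\mathcal{X}}\big(z_t^{(k-1)}-\frac1L\nabla f_{t-1}(z_t^{(k-1)})\big)$ ($k=1,\dots,K$), $x_t=z_t^{(K)}$, where $\Pi_{\mathcal{X}}$ is Euclidean projection onto $\mathcal{X}$. *)

(* Defs.v *)
From HB Require Import structures.
From mathcomp Require Import all_boot all_order all_algebra.
From mathcomp Require Import all_classical all_reals all_analysis.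
Set Implicit Arguments. Unset Strict Implicit. Unset Printing Implicit Defensive.
Import Order.TTheory GRing.Theory Num.Theory.
Import numFieldNormedType.Exports.
Local Open Scope classical_set_scope.
Local Open Scope ring_scope.

Section Defs.
Variables (R : realType) (d : nat).
Notation vec := 'rV[R]_d.

Definition dotv (u v : vec) : R := \sum_(i < d) u ord0 i * v ord0 i.
Definition enorm (u : vec) : R := Num.sqrt (dotv u u).

Definition grad (f : vec -> R) (x : vec) : vec :=
  \row_(i < d) ('d f x) (delta_mx ord0 i).

Definition is_proj (X : set vec) (z p : vec) : Prop :=
  X p /\ forall y, X y -> enorm (z - p) <= enorm (z - y).
Definition proj (X : set vec) (z : vec) : vec := xget 0 (is_proj X z).

Definition is_argmin (X : set vec) (f : vec -> R) (p : vec) : Prop :=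
  X p /\ forall y, X y -> f p <= f y.
Definition argmin (X : set vec) (f : vec -> R) : vec := xget 0 (is_argmin X f).

Definition omgd_step (X : set vec) (L : R) (g : vec -> R) (z : vec) : vec :=
  proj X (z - L^-1 *: grad g z).

(* OMGD iterates: x_0 = x0, x_1 = x0, x_t = (step for f_{t-1})^K (x_{t-1}) *)
Fixpoint omgd (X : set vec) (f : nat -> vec -> R) (L : R) (K : nat) (x0 : vec)
    (t : nat) : vec :=
  match t with
  | 0 => x0
  | m.+1 => if m is 0 then x0 else iter K (omgd_step X L (f m)) (omgd X f L K x0 m)
  end.

End Defs.

(* Main.v *)
Require Import Defs.
From HB Require Import structures.
From mathcomp Require Import all_boot all_order all_algebra.
From mathcomp Require Import all_classical all_reals all_analysis.
Import Order.TTheory GRing.Theory Num.Theory.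
Import numFieldNormedType.Exports.
Local Open Scope classical_set_scope.
Local Open Scope ring_scope.
From mathcomp Require Import ring lra.

Section Aux.
Set Implicit Arguments. Unset Strict Implicit.
Variables (R : realType) (d : nat).
Local Notation vec := 'rV[R]_d.
Implicit Types u v w : vec.

Lemma dotvC u v : dotv u v = dotv v u.
Proof. by rewrite /dotv; apply: eq_bigr => i _; rewrite mulrC. Qed.

Lemma dotvDl u v w : dotv (u + v) w = dotv u w + dotv v w.
Proof. by rewrite /dotv -big_split; apply: eq_bigr => i _; rewrite mxE mulrDl. Qed.

Lemma dotvZl (a : R) u w : dotv (a *: u) w = a * dotv u w.
Proof. by rewrite /dotv mulr_sumr; apply: eq_bigr => i _; rewrite mxE mulrA. Qed.

Lemma dotvNl u w : dotv (- u) w = - dotv u w.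
Proof. by rewrite -scaleN1r dotvZl mulN1r. Qed.

Lemma dotvBl u v w : dotv (u - v) w = dotv u w - dotv v w.
Proof. by rewrite dotvDl dotvNl. Qed.

Lemma dotvDr u v w : dotv w (u + v) = dotv w u + dotv w v.
Proof. by rewrite dotvC dotvDl !(dotvC w). Qed.

Lemma dotvZr (a : R) u w : dotv w (a *: u) = a * dotv w u.
Proof. by rewrite dotvC dotvZl dotvC. Qed.

Lemma dotvNr u w : dotv w (- u) = - dotv w u.
Proof. by rewrite dotvC dotvNl dotvC. Qed.

Lemma dotvBr u v w : dotv w (u - v) = dotv w u - dotv w v.
Proof. by rewrite dotvDr dotvNr. Qed.

Lemma dotv0l w : dotv 0 w = 0.
Proof. by rewrite /dotv big1 // => i _; rewrite mxE mul0r. Qed.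

Lemma dotvv_ge0 u : 0 <= dotv u u.
Proof. by rewrite /dotv sumr_ge0 // => i _; rewrite -expr2 sqr_ge0. Qed.

Lemma enorm_ge0 u : 0 <= enorm u.
Proof. exact: sqrtr_ge0. Qed.

Lemma enorm_sq u : enorm u ^+ 2 = dotv u u.
Proof. by rewrite /enorm sqr_sqrtr // dotvv_ge0. Qed.

Lemma enorm0 : enorm (0 : vec) = 0.
Proof. by rewrite /enorm dotv0l sqrtr0. Qed.

Lemma enormN u : enorm (- u) = enorm u.
Proof. by rewrite /enorm dotvNl dotvNr opprK. Qed.

Lemma enormB u v : enorm (u - v) = enorm (v - u).
Proof. by rewrite -enormN opprB. Qed.

Lemma dotvv0 u : dotv u u = 0 -> forall w, dotv u w = 0.
Proof.
move=> h w.
have hi : forall i, u ord0 i = 0.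
  move=> i; move: h; rewrite /dotv => /eqP; rewrite psumr_eq0; last first.
    by move=> j _; rewrite -expr2 sqr_ge0.
  by move=> /allP /(_ i (mem_index_enum _)) /=; rewrite mulf_eq0 orbb => /eqP.
by rewrite /dotv big1 // => i _; rewrite hi mul0r.
Qed.

Lemma young (a : R) u v : 2 * a * dotv u v <= dotv u u + a ^+ 2 * dotv v v.
Proof.
have := dotvv_ge0 (u - a *: v).
rewrite !(dotvBl, dotvBr, dotvZl, dotvZr) (dotvC v u).
move=> h; nra.
Qed.

Lemma cauchy_schwarz u v : dotv u v <= enorm u * enorm v.
Proof.
have hu := enorm_ge0 u; have hv := enorm_ge0 v.
have su := enorm_sq u; have sv := enorm_sq v.
have [u0|upos] := eqVneq (enorm u) 0.
  have : dotv u u = 0 by rewrite -su u0 expr2 mul0r.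
  by move=> /dotvv0 ->; rewrite u0 mul0r.
have [v0|vpos] := eqVneq (enorm v) 0.
  have : dotv v v = 0 by rewrite -sv v0 expr2 mul0r.
  by move=> /dotvv0; rewrite dotvC => ->; rewrite v0 mulr0.
have ev : 0 < enorm v by rewrite lt_neqAle eq_sym vpos.
have eu : 0 < enorm u by rewrite lt_neqAle eq_sym upos.
have := young (enorm v / enorm u) v u.
rewrite (dotvC v u) -su -sv => h.
have e : enorm v ^+ 2 + (enorm v / enorm u) ^+ 2 * enorm u ^+ 2
   = 2 * (enorm v / enorm u) * (enorm u * enorm v).
  by field; rewrite gt_eqF.
rewrite e in h.
move: h; rewrite ler_pM2l //; apply: mulr_gt0 => //; apply: divr_gt0 => //.
Qed.

Lemma enormD u v : enorm (u + v) <= enorm u + enorm v.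
Proof.
have hu := enorm_ge0 u; have hv := enorm_ge0 v.
rewrite -(ler_pXn2r (isT : (0 < 2)%N)) ?nnegrE ?addr_ge0 ?enorm_ge0 //.
rewrite enorm_sq dotvDl !dotvDr (dotvC v u) sqrrD !enorm_sq.
have := cauchy_schwarz u v; lra.
Qed.

Lemma enorm_tri u v w : enorm (u - w) <= enorm (u - v) + enorm (v - w).
Proof. by have := enormD (u - v) (v - w); rewrite addrA subrK. Qed.

Lemma enormZ (a : R) u : enorm (a *: u) = `|a| * enorm u.
Proof.
rewrite /enorm dotvZl dotvZr mulrA -expr2 sqrtrM ?sqr_ge0 //.
by rewrite sqrtr_sqr.
Qed.

Lemma normv_le_enorm u : `|u| <= enorm u.
Proof.
rewrite (_ : `|u| = mx_norm u) // mx_normrE.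
apply: bigmax_le => //; first exact: enorm_ge0.
move=> [i j] _ /=; rewrite (ord1 i).
rewrite -(ler_pXn2r (isT : (0 < 2)%N)) ?nnegrE ?enorm_ge0 // enorm_sq.
rewrite real_normK ?num_real // /dotv (bigD1 j) //= -expr2 lerDl.
by rewrite sumr_ge0 // => k _; rewrite -expr2 sqr_ge0.
Qed.

End Aux.
Section Exist.
Set Implicit Arguments. Unset Strict Implicit.
Variables (R : realType) (d : nat).
Local Notation vec := 'rV[R]_d.

Lemma exists_min (X : set vec) (g : vec -> R) (x0 : vec) (r : R) :
  0 <= r -> closed X -> X x0 -> (forall x, X x -> {for x, continuous g}) ->
  (forall y, X y -> r < `|y - x0| -> g x0 <= g y) -> exists p, is_argmin X g p.
Proof.
move=> r0 cX Xx0 cg coer.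
pose B := X `&` closed_ball_ Num.norm x0 r.
have cB : closed B by apply: closedI => //; exact: closed_closed_ball_.
have bB : bounded_set B.
  exists (`|x0| + r); split; first by rewrite num_real.
  move=> M hM x [_ Bx] /=; apply/ltW/(le_lt_trans _ hM).
  rewrite /closed_ball_ /= in Bx.
  have -> : x = x0 - (x0 - x) by rewrite opprB addrC subrK.
  by apply: (le_trans (ler_normB _ _)); rewrite lerD2l.
have kB : compact B by apply: bounded_closed_compact.
have B0 : B !=set0 by exists x0; split => //; rewrite /closed_ball_ /= subrr normr0.
have ctB : {within B, continuous g}.
  apply: continuous_in_subspaceT => x; rewrite inE => -[Xx _]; exact: cg.
have [p pB pmin] := compact_EVT_min B0 kB ctB.
move: pB; rewrite inE => -[Xp _].
exists p; split => // y Xy.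
have [yr|ry] := leP `|y - x0| r.
  apply: pmin; rewrite inE; split => //; rewrite /closed_ball_ /=.
  by rewrite -normrN opprB.
apply: (le_trans _ (coer y Xy ry)); apply: pmin.
by rewrite inE; split => //; rewrite /closed_ball_ /= subrr normr0.
Qed.

End Exist.
Section Proj.
Set Implicit Arguments. Unset Strict Implicit.
Variables (R : realType) (d : nat).
Local Notation vec := 'rV[R]_d.

Lemma sum_cont (F : 'I_d -> vec -> R) (s : seq 'I_d) :
  (forall i, continuous (F i)) -> continuous (fun y => \sum_(i <- s) F i y).
Proof.
move=> hF; elim: s => [|i s IH].
  under eq_fun do rewrite big_nil; exact: cst_continuous.
under eq_fun do rewrite big_cons.
move=> y; exact: (continuousD (hF i y) (IH y)).
Qed.

Lemma dotv_cont (z : vec) : continuous (fun y : vec => dotv (z - y) (z - y)).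
Proof.
rewrite /dotv; apply: sum_cont => i y.
under eq_fun do rewrite !mxE.
have c : {for y, continuous (fun y0 : vec => z ord0 i - y0 ord0 i)}.
  apply: (continuousB (f := fun=> z ord0 i) (g := fun y0 : vec => y0 ord0 i)).
    exact: cst_continuous.
  exact: coord_continuous.
exact: (continuousM c c).
Qed.

Lemma conv_in (X : set vec) (a b : vec) (s : R) : convex_set X -> X a -> X b ->
  0 <= s -> s <= 1 -> X (s *: a + (1 - s) *: b).
Proof.
move=> cX Xa Xb s0 s1.
have [l ls] : exists l : {i01 R}, l%:num = s.
  unshelve eexists (@Itv.mk _ _ _ s _); last by [].
  rewrite /Itv.num_sem /= in_itv /= s0 s1 andbT num_real //.
have := cX a b l; rewrite !inE => /(_ Xa Xb).
by rewrite /conv /= ls.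
Qed.

End Proj.
Section Proj2.
Set Implicit Arguments. Unset Strict Implicit.
Variables (R : realType) (d : nat).
Local Notation vec := 'rV[R]_d.

Lemma lim0 (a b : R) : 0 <= b -> (forall s, 0 < s -> s < 1 -> a <= s * b) -> a <= 0.
Proof.
move=> b0 h; rewrite leNgt; apply/negP => a0.
have s0 : 0 < a / (2 * (a + b)) by apply: divr_gt0 => //; nra.
have s1 : a / (2 * (a + b)) < 1.
  by rewrite ltr_pdivrMr; nra.
have := h _ s0 s1.
rewrite mulrC mulrA ler_pdivlMr; last by nra.
nra.
Qed.

Lemma proj_spec (X : set vec) (z : vec) : closed X -> X !=set0 ->
  is_proj X z (Defs.proj X z).
Proof.
move=> cX [x0 Xx0]; rewrite /Defs.proj; apply: xgetPex.
pose h := fun y : vec => dotv (z - y) (z - y).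
have [p [Xp pm]] : exists p, is_argmin X h p.
apply: (@exists_min _ _ X h x0 (1 + 4 * dotv (z - x0) (z - x0))) => //.
- by have := dotvv_ge0 (z - x0); lra.
- by move=> x _; exact: dotv_cont.
- move=> y Xy ry; rewrite /h.
  have -> : z - y = (z - x0) - (y - x0) by rewrite opprB addrA subrK.
  have hb := normv_le_enorm (y - x0).
  have hr : 1 <= 1 + 4 * dotv (z - x0) (z - x0) by have := dotvv_ge0 (z - x0); lra.
  have hbb : 1 + 4 * dotv (z - x0) (z - x0) <= dotv (y - x0) (y - x0).
    rewrite -[dotv (y - x0) (y - x0)]enorm_sq.
    have he := lt_le_trans ry hb.
    set e := enorm (y - x0) in he *.
    have e1 : 0 <= e - 1 by lra.
    have e0 : 0 <= e by lra.
    have := mulr_ge0 e1 e0.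
    rewrite expr2; nra.
  have hy := young 2 (y - x0) (z - x0).
  move: hy hbb hr; move: (z - x0) (y - x0) => a b hy hbb hr.
  rewrite !(dotvBl, dotvBr) (dotvC b a) in hy *.
  nra.
exists p; split => // y Xy; rewrite /enorm; apply: ler_wsqrtr; exact: pm.
Qed.

Lemma proj_var (X : set vec) (z p y : vec) : convex_set X -> is_proj X z p -> X y ->
  dotv (z - p) (y - p) <= 0.
Proof.
move=> cX [Xp pm] Xy.
apply: (@lim0 _ (dotv (y - p) (y - p) / 2)).
  by have := dotvv_ge0 (y - p); lra.
move=> s s0 s1.
have Xw := conv_in cX Xy Xp (ltW s0) (ltW s1).
have := pm _ Xw.
have -> : z - (s *: y + (1 - s) *: p) = (z - p) - s *: (y - p).
  by apply/rowP => i; rewrite !mxE; ring.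
rewrite -(ler_pXn2r (isT : (0 < 2)%N)) ?nnegrE ?enorm_ge0 // !enorm_sq.
have := dotvv_ge0 (y - p).
move: (z - p) (y - p) => a v.
rewrite !(dotvBl, dotvBr, dotvZl, dotvZr) (dotvC v a).
nra.
Qed.

Lemma argmin_strong (X : set vec) (f : vec -> R) (G : vec -> vec) (mu : R) (p y : vec) :
  convex_set X ->
  (forall x y, X x -> X y -> mu / 2 * enorm (y - x) ^+ 2 <= f y - f x - dotv (G x) (y - x)) ->
  0 <= mu -> is_argmin X f p -> X y -> mu / 2 * enorm (y - p) ^+ 2 <= f y - f p.
Proof.
move=> cX hs mu0 [Xp pm] Xy.
rewrite -subr_le0.
apply: (@lim0 _ (mu / 2 * enorm (y - p) ^+ 2)).
  by apply: mulr_ge0; [lra | exact: sqr_ge0].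
move=> s s0 s1.
have Xw := conv_in cX Xy Xp (ltW s0) (ltW s1).
set w := s *: y + (1 - s) *: p.
have h1 := hs _ _ Xw Xp.
have h2 := hs _ _ Xw Xy.
have h3 := pm _ Xw.
have e1 : p - w = (- s) *: (y - p) by apply/rowP => i; rewrite !mxE; ring.
have e2 : y - w = (1 - s) *: (y - p) by apply/rowP => i; rewrite !mxE; ring.
rewrite e1 e2 !enorm_sq !(dotvZl, dotvZr) in h1 h2.
rewrite enorm_sq.
set vv := dotv (y - p) (y - p) in h1 h2 *.
set gv := dotv (G w) (y - p) in h1 h2.
have vv0 : 0 <= vv by apply: dotvv_ge0.
have k : mu / 2 * vv * (s * (1 - s)) <= s * (f y - f p) by nra.
have k2 : mu / 2 * vv * (1 - s) <= f y - f p.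
  by rewrite -(ler_pM2l s0); nra.
nra.
Qed.

End Proj2.
Section Step.
Set Implicit Arguments. Unset Strict Implicit.
Variables (R : realType) (d : nat).
Local Notation vec := 'rV[R]_d.

Lemma step_contr (X : set vec) (f : vec -> R) (mu L : R) (z xs : vec) :
  convex_set X -> closed X -> X !=set0 -> 0 < mu -> mu <= L ->
  (forall x y, X x -> X y ->
     mu / 2 * enorm (y - x) ^+ 2 <= f y - f x - dotv (grad f x) (y - x)
     /\ f y - f x - dotv (grad f x) (y - x) <= L / 2 * enorm (y - x) ^+ 2) ->
  is_argmin X f xs -> X z ->
  X (omgd_step X L f z) /\
  (L + mu) * enorm (omgd_step X L f z - xs) ^+ 2 <= (L - mu) * enorm (z - xs) ^+ 2.
Proof.
move=> cX clX X0 mu0 muL hs [Xxs xsm] Xz.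
rewrite /omgd_step.
set p := Defs.proj X _.
have pp : is_proj X (z - L^-1 *: grad f z) p by apply: proj_spec.
have Xp : X p by case: pp.
split => //.
have pv := proj_var cX pp Xxs.
have [_ sm] := hs _ _ Xz Xp.
have [st _] := hs _ _ Xz Xxs.
have as1 := argmin_strong (G := grad f) cX (fun x y Xx Xy => (hs x y Xx Xy).1)
   (ltW mu0) (conj Xxs xsm) Xp.
set q := L^-1 *: grad f z in pv.
have L0 : 0 < L by apply: lt_le_trans muL.
have eg : grad f z = L *: q by rewrite /q scalerA mulfV ?scale1r // gt_eqF.
rewrite eg in sm st.
have e1 : z - q - p = (z - p) - q by apply/rowP => i; rewrite !mxE; ring.
have e2 : xs - p = - (p - xs) by rewrite opprB.
have e3 : p - z = - (z - p) by rewrite opprB.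
have e4 : xs - z = - ((z - p) + (p - xs)) by apply/rowP => i; rewrite !mxE; ring.
have e5 : z - xs = (z - p) + (p - xs) by apply/rowP => i; rewrite !mxE; ring.
rewrite e1 e2 in pv; rewrite e3 in sm; rewrite e4 in st; rewrite e5.
rewrite !enorm_sq in sm st as1 *.
clear eg e1 e2 e3 e4 e5.
move: pv sm st as1; move: (z - p) (p - xs) q => a b g pv sm st as1.
rewrite !(dotvBl, dotvBr, dotvZl, dotvZr, dotvDl, dotvDr, dotvNl, dotvNr) in pv sm st as1 *.
rewrite !(dotvC b a) !(dotvC g a) !(dotvC g b) in pv sm st as1 *.
nra.
Qed.

Lemma iter_contr (X : set vec) (f : vec -> R) (mu L : R) (xs : vec) (K : nat) (z : vec) :
  convex_set X -> closed X -> X !=set0 -> 0 < mu -> mu <= L ->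
  (forall x y, X x -> X y ->
     mu / 2 * enorm (y - x) ^+ 2 <= f y - f x - dotv (grad f x) (y - x)
     /\ f y - f x - dotv (grad f x) (y - x) <= L / 2 * enorm (y - x) ^+ 2) ->
  is_argmin X f xs -> X z ->
  X (iter K (omgd_step X L f) z) /\
  enorm (iter K (omgd_step X L f) z - xs) ^+ 2 <= ((L - mu) / (L + mu)) ^+ K * enorm (z - xs) ^+ 2.
Proof.
move=> cX clX X0 mu0 muL hs am Xz.
elim: K => [|K [XK IH]] /=; first by rewrite expr0 mul1r.
have [Xs hc] := step_contr cX clX X0 mu0 muL hs am XK.
split => //.
have Lm : 0 < L + mu by apply: addr_gt0 => //; apply: lt_le_trans muL.
rewrite [_ ^+ K.+1]exprS -mulrA.
apply: (le_trans (y := (L - mu) / (L + mu) * enorm (iter K (omgd_step X L f) z - xs) ^+ 2)).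
  by rewrite mulrAC ler_pdivlMr // mulrC.
apply: ler_wpM2l => //; apply: divr_ge0; lra.
Qed.

Lemma K_bound (mu L : R) (K : nat) : 0 < mu -> mu <= L ->
  (L + mu) / (2 * mu) * ln 4 <= K%:R -> ((L - mu) / (L + mu)) ^+ K <= 4^-1.
Proof.
move=> mu0 muL hK.
have Lm : 0 < L + mu by lra.
set q := (L - mu) / (L + mu).
have q0 : 0 <= q by apply: divr_ge0; lra.
have qe : q = 1 + (- (2 * mu / (L + mu))) by rewrite /q; field; rewrite gt_eqF.
have h1 : q <= expR (- (2 * mu / (L + mu))) by rewrite {1}qe expR_ge1Dx.
apply: (le_trans (y := expR (- (2 * mu / (L + mu))) ^+ K)).
  by apply: lerXn2r => //; rewrite nnegrE // ltW // expR_gt0.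
rewrite -expRM_natl.
have -> : (4 : R)^-1 = expR (- ln 4) by rewrite expRN lnK // posrE.
rewrite ler_expR mulrN lerN2.
have c0 : 0 < 2 * mu / (L + mu) by apply: divr_gt0; lra.
have -> : ln (4 : R) = ((L + mu) / (2 * mu) * ln 4) * (2 * mu / (L + mu)).
  by field; apply/andP; split; rewrite gt_eqF //; lra.
by apply: ler_wpM2r => //; apply: ltW.
Qed.

End Step.
Section Sums.
Set Implicit Arguments. Unset Strict Implicit.
Variable (R : realType).

Lemma sumA (c dl : nat -> R) T : (1 <= T)%N -> (forall t, 0 <= c t) ->
  (forall t, (2 <= t <= T)%N -> c t <= c t.-1 / 2 + dl t) ->
  \sum_(1 <= t < T.+1) c t <= 2 * c 1%N + 2 * \sum_(2 <= t < T.+1) dl t.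
Proof.
move=> T1 c0 hc.
suff H : forall n, (1 <= n <= T)%N ->
  \sum_(1 <= t < n.+1) c t + c n <= 2 * c 1%N + 2 * \sum_(2 <= t < n.+1) dl t.
  by have := H T; rewrite T1 leqnn => /(_ isT); have := c0 T; lra.
elim => [//|n IH] /andP [_ hn].
case: n IH hn => [|n] IH hn.
  by rewrite big_nat1 big_geq //; lra.
rewrite big_nat_recr //= [X in _ <= _ + 2 * X]big_nat_recr //=.
have := IH (ltnW hn).
have := hc n.+2; rewrite hn /= => /(_ isT) /=.
lra.
Qed.

Lemma sumB (c dl : nat -> R) T : (1 <= T)%N -> (forall t, 0 <= c t) ->
  (forall t, (2 <= t <= T)%N -> c t <= c t.-1 / 2 + dl t) ->
  \sum_(2 <= t < T.+1) c t.-1 <= 2 * c 1%N + 2 * \sum_(2 <= t < T.+1) dl t.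
Proof.
move=> T1 c0 hc.
suff H : forall n, (1 <= n <= T)%N ->
  \sum_(2 <= t < n.+1) c t.-1 + 2 * c n <= 2 * c 1%N + 2 * \sum_(2 <= t < n.+1) dl t.
  by have := H T; rewrite T1 leqnn => /(_ isT); have := c0 T; lra.
elim => [//|n IH] /andP [_ hn].
case: n IH hn => [|n] IH hn.
  by rewrite !big_geq //; lra.
rewrite big_nat_recr //= [X in _ <= _ + 2 * X]big_nat_recr //=.
have := IH (ltnW hn).
have := hc n.+2; rewrite hn /= => /(_ isT) /=.
lra.
Qed.

End Sums.

Section Arith.
Variable R : realType.

Lemma ar_F4 (a b e : R) : a <= e / 2 -> b = e -> a + b <= 3 / 2 * e.
Proof. move=> h ->; lra. Qed.

Lemma ar_F3 (u v w : R) : 0 <= u -> u <= v / 2 + w -> u ^+ 2 <= v ^+ 2 / 2 + 2 * w ^+ 2.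
Proof.
move=> u0 h.
have s1 : u ^+ 2 <= (v / 2 + w) ^+ 2.
  by apply: lerXn2r => //; rewrite nnegrE //; apply: le_trans h.
have s2 := sqr_ge0 (v / 2 - w).
move: s1 s2; rewrite !expr2 => s1 s2; nra.
Qed.

Lemma ar_F1 (fx fs D GG V L al : R) : 0 < al -> fx - fs - D <= L / 2 * V ->
  2 * al * D <= GG + al ^+ 2 * V ->
  fx <= fs + (2 * al)^-1 * GG + (L + al) / 2 * V.
Proof.
move=> a0 sm hy.
have hD : D <= (2 * al)^-1 * GG + al / 2 * V.
  rewrite -(ler_pM2l (_ : 0 < 2 * al)) ?mulr_gt0 // mulrDr mulrA mulfV ?mul1r.
    by rewrite expr2 in hy; nra.
  by rewrite gt_eqF // mulr_gt0.
lra.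
Qed.

Lemma ar_final (Sf Sfs W SG S c1 Sm SB P P2 L al : R) :
  Sf <= Sfs + W * SG + (L + al) / 2 * S ->
  (L + al) / 2 * S <= (L + al) / 2 * (2 * c1 ^+ 2 + 2 * (2 * P2)) ->
  Sm <= 3 / 2 * SB -> SB <= 2 * c1 + 2 * P ->
  Sf + Sm <= Sfs + W * SG + (L + al) * (c1 ^+ 2 + 2 * P2) + 3 * c1 + 3 * P.
Proof. move=> h1 h2 h3 h4; nra. Qed.

End Arith.

Theorem lemma13 (R : realType) (d T : nat) (X : set 'rV[R]_d) (mu L : R)
  (f : nat -> 'rV[R]_d -> R) (x0 : 'rV[R]_d) :
  (1 <= d)%N -> (1 <= T)%N ->
  X !=set0 -> closed X -> convex_set X ->
  0 < mu -> mu <= L ->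
  (forall t, (1 <= t <= T)%N -> forall x, X x -> 0 <= f t x) ->
  (forall t, (1 <= t <= T)%N -> forall x, X x -> differentiable (f t) x) ->
  (forall t, (1 <= t <= T)%N -> forall x y, X x -> X y ->
     mu / 2 * enorm (y - x) ^+ 2 <= f t y - f t x - dotv (grad (f t) x) (y - x)
     /\ f t y - f t x - dotv (grad (f t) x) (y - x) <= L / 2 * enorm (y - x) ^+ 2) ->
  X x0 ->
  let K := `| Num.ceil ((L + mu) / (2 * mu) * ln 4) |%N in
  let x := omgd X f L K x0 in
  let xs := fun t => argmin X (f t) in
  let cost := \sum_(1 <= t < T.+1) (f t (x t) + enorm (x t - x t.-1)) in
  let P := \sum_(2 <= t < T.+1) enorm (xs t - xs t.-1) in
  let P2 := \sum_(2 <= t < T.+1) enorm (xs t - xs t.-1) ^+ 2 in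
  forall alpha : R, 0 < alpha ->
  cost <= \sum_(1 <= t < T.+1) f t (xs t)
          + (2 * alpha)^-1 * \sum_(1 <= t < T.+1) enorm (grad (f t) (xs t)) ^+ 2
          + (L + alpha) * (enorm (x 1%N - xs 1%N) ^+ 2 + 2 * P2)
          + 3 * enorm (x 1%N - xs 1%N) + 3 * P.
Proof.
move=> d1 T1 X0 clX cX mu0 muL f0 fd fs Xx0 K x xs cost P P2 alpha a0.
have L0 : 0 < L by apply: lt_le_trans muL.
have am : forall t, (1 <= t <= T)%N -> is_argmin X (f t) (xs t).
  move=> t ht; rewrite /xs /argmin; apply: xgetPex.
  set G := grad (f t) x0.
  set W := dotv G G / mu ^+ 2.
  have W0 : 0 <= W by apply: divr_ge0; [exact: dotvv_ge0 | exact: sqr_ge0].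
  have GW : dotv G G = W * mu ^+ 2 by rewrite /W mulfVK // expf_neq0 // gt_eqF.
  apply: (@exists_min _ _ X (f t) x0 (1 + 4 * W)) => //.
  - lra.
  - by move=> z Xz; apply: differentiable_continuous; exact: fd.
  move=> y Xy ry.
  have [st _] := fs t ht _ _ Xx0 Xy.
  have hb := normv_le_enorm (y - x0).
  have he := lt_le_trans ry hb.
  have hy := young (- (mu / 2)) G (y - x0).
  rewrite enorm_sq in st.
  have vv : 1 + 4 * W <= dotv (y - x0) (y - x0).
    rewrite -enorm_sq; set e := enorm (y - x0) in he *.
    have e1 : 0 <= e - 1 by lra.
    have e0 : 0 <= e by lra.
    have := mulr_ge0 e1 e0; rewrite expr2; nra.
  move: st hy vv; rewrite GW; set D := dotv G (y - x0); set V := dotv (y - x0) (y - x0).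
  move=> st hy vv.
  have k1 : 4 * W * mu ^+ 2 <= V * mu ^+ 2.
    by apply: ler_wpM2r; [exact: sqr_ge0 | lra].
  have k2 : 0 <= mu * (f t y - f t x0) by nra.
  by move: k2; rewrite pmulr_rge0 // subr_ge0.
have Xit : forall g K' z, X z -> X (iter K' (omgd_step X L g) z).
  move=> g; elim => [//|K' IH] z Xz /=.
  by case: (@proj_spec _ _ X (iter K' (omgd_step X L g) z - L^-1 *: grad g (iter K' (omgd_step X L g) z)) clX X0).
have Xx : forall t, X (x t).
  by elim => [//|[//|m] IH] //=; apply: Xit.
have xS : forall t, (1 <= t)%N -> x t.+1 = iter K (omgd_step X L (f t)) (x t).
  by case.
have hK : ((L - mu) / (L + mu)) ^+ K <= 4^-1.
  apply: K_bound => //.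
  rewrite /K natr_absz ger0_norm; first exact: ceil_ge.
  rewrite ceil_ge0; apply: (lt_le_trans (y := 0)); first by rewrite ltrN10.
  apply: mulr_ge0; first by apply: divr_ge0; lra.
  by apply: ln_ge0; rewrite (ler_nat R 1 4).
have contr : forall t, (1 <= t)%N -> (t < T)%N ->
    enorm (x t.+1 - xs t) <= enorm (x t - xs t) / 2.
  move=> t t1 tT.
  have htT : (1 <= t <= T)%N by rewrite t1 ltnW.
  have [_ h] := iter_contr K cX clX X0 mu0 muL (fs t htT) (am t htT) (Xx t).
  rewrite -xS // in h.
  rewrite -(ler_pXn2r (isT : (0 < 2)%N)) ?nnegrE ?enorm_ge0 //; last first.
    by apply: divr_ge0 => //; exact: enorm_ge0.
  apply: (le_trans h).
  rewrite [X in _ <= X]expr_div_n [X in X <= _]mulrC ler_wpM2l ?sqr_ge0 //.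
  have -> : (2 : R) ^+ 2 = 4 by rewrite -natrX.
  exact: hK.
set c := fun t => enorm (x t - xs t).
set dl := fun t => enorm (xs t - xs t.-1).
have c0 : forall t, 0 <= c t by move=> t; exact: enorm_ge0.
have F2 : forall t, (2 <= t <= T)%N -> c t <= c t.-1 / 2 + dl t.
  move=> [//|[//|t]] /andP [_ ht].
  have := contr t.+1 isT ht => h.
  apply: (le_trans (enorm_tri _ (xs t.+1) _)).
  by rewrite /c /dl /= (enormB (xs t.+1)); exact: lerD h (lexx _).
have F3 : forall t, (2 <= t <= T)%N -> c t ^+ 2 <= c t.-1 ^+ 2 / 2 + 2 * dl t ^+ 2.
  move=> t ht; apply: ar_F3 => //; exact: F2.
have F4 : forall t, (2 <= t <= T)%N -> enorm (x t - x t.-1) <= 3 / 2 * c t.-1.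
  move=> [//|[//|t]] /andP [_ ht].
  have := contr t.+1 isT ht => h.
  apply: (le_trans (enorm_tri _ (xs t.+1) _)).
  by apply: ar_F4; rewrite /c //= (enormB (xs t.+1) (x t.+1)).
have F1 : forall t, (1 <= t <= T)%N ->
    f t (x t) <= f t (xs t) + (2 * alpha)^-1 * enorm (grad (f t) (xs t)) ^+ 2
                 + (L + alpha) / 2 * c t ^+ 2.
  move=> t ht.
  have [Xxs _] := am t ht.
  have [_ sm] := fs t ht _ _ Xxs (Xx t).
  have hy := young alpha (grad (f t) (xs t)) (x t - xs t).
  rewrite /c; rewrite !enorm_sq in sm *.
  exact: ar_F1 sm hy.
have SA := sumA T1 (fun t => sqr_ge0 (c t)) F3.
have SB := sumB T1 c0 F2.
rewrite -!mulr_sumr in SA.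
have Sf : \sum_(1 <= t < T.+1) f t (x t) <=
    \sum_(1 <= t < T.+1) f t (xs t)
    + (2 * alpha)^-1 * \sum_(1 <= t < T.+1) enorm (grad (f t) (xs t)) ^+ 2
    + (L + alpha) / 2 * \sum_(1 <= t < T.+1) c t ^+ 2.
  rewrite !mulr_sumr -!big_split /=.
  rewrite big_nat [X in _ <= X]big_nat; apply: ler_sum => t ht; exact: F1.
have Sm : \sum_(1 <= t < T.+1) enorm (x t - x t.-1) <= 3 / 2 * \sum_(2 <= t < T.+1) c t.-1.
  rewrite big_ltn // /= subrr enorm0 add0r mulr_sumr.
  rewrite big_nat [X in _ <= X]big_nat; apply: ler_sum => t ht; exact: F4.
have -> : cost = \sum_(1 <= t < T.+1) f t (x t) + \sum_(1 <= t < T.+1) enorm (x t - x t.-1).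
  by rewrite /cost big_split.
rewrite -/P -/P2 in SA SB *.
have LA : 0 <= L + alpha by apply: addr_ge0; apply: ltW.
have SA' : (L + alpha) / 2 * \sum_(1 <= t < T.+1) c t ^+ 2 <=
    (L + alpha) / 2 * (2 * c 1%N ^+ 2 + 2 * (2 * P2)).
  by apply: ler_wpM2l => //; apply: divr_ge0.
rewrite /c /= in Sf SA' SB.
exact: ar_final Sf SA' Sm SB.
Qed.
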